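(* The synthesis problem in $\lambda_H$ is undecidable: there is no algorithm that, given a finite component library $\Lambda$ (over a finite set of type constructors) and a ground query type $t$, decides whether there exists a normal-form term $E$ with $\cdot\vdash E:t$.
   Context: Fix a set of type constructors, each with a fixed arity, and an infinite set of type variables. Base types are $B ::= \tau \mid C\,B_1\ldots B_k$; ground base types $b$ contain no type variables. Types are $T ::= B\mid B\to T$; ground types $t ::= b\mid b\to t$. A polytype is $\forall\tau_1\ldots\tau_n.T$. A component library $\Lambda$ is a finite map from component names $c$ to polytypes; the arity of $c$ is the number of arrows in $\Lambda(c)$. A substitution $\sigma$ maps type variables to base types (identity elsewhere). Terms ($\lambda_H$, η-long): application terms $e::=x\mid c(e_1,\ldots,e_m)$ with $m$ the arity of $c$; normal-form terms $E::=e\mid\lambda x.E$. A typing environment $\Gamma$ maps variables to ground base types. Declarative typing $\Gamma\vdash E:t$: (Var) if $\Gamma(x)=b$ then $\Gamma\vdash x:b$; (App) if $\Lambda(c)=\forall\bar\tau.T$, $\sigma T=b_1\to\cdots\to b_m\to b$ is ground and $\Gamma\vdash e_i:b_i$ for all $i$, then $\Gamma\vdash c(e_1,\ldots,e_m):b$; (Fun) if $\Gamma,x{:}b\vdash E:t$ then $\Gamma\vdash\lambda x.E:b\to t$. A synthesis problem is a pair $(\Lambda,t)$ and a solution is a normal-form term $E$ with $\cdot\vdash E:t$. *)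

(* Defs.v *)
From mathcomp Require Import all_boot.
Set Implicit Arguments. Unset Strict Implicit. Unset Printing Implicit Defensive.

(* A type constructor is identified by
   its name c : nat together with its number of arguments, so every constructor
   has a fixed arity (the constructor set is nat * nat; any finite signature
   embeds into it). *)
Inductive btype : Type :=
| TVar (tau : nat)
| TCon (c : nat) (args : seq btype).

Fixpoint bground (B : btype) : bool :=
  match B with
  | TVar _ => false
  | TCon _ args => all bground args
  end.

(* T ::= B | B -> T, represented as (B1 :: ... :: Bm, B) for B1 -> ... -> Bm -> B. *)
Definition ty := (seq btype * btype)%type.

Definition tground (T : ty) : bool := all bground T.1 && bground T.2.

Definition subst := nat -> btype.

Fixpoint bsubst (s : subst) (B : btype) : btype :=
  match B with
  | TVar tau => s tau
  | TCon c args => TCon c (map (bsubst s) args)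
  end.

Definition tsubst (s : subst) (T : ty) : ty := (map (bsubst s) T.1, bsubst s T.2).

(* A component library: component named i has polytype (nth i) ; the polytype
   forall tau1..taun. T is represented by T (all its variables are the
   quantified ones; the rule (App) instantiates them by an arbitrary
   substitution). *)
Definition library := seq ty.

Inductive aterm : Type :=
| AVar (x : nat)
| AApp (c : nat) (args : seq aterm).

Inductive nterm : Type :=
| NA (e : aterm)
| NLam (x : nat) (E : nterm).

Definition env := nat -> option btype.
Definition env0 : env := fun _ => None.
Definition env_ext (G : env) (x : nat) (b : btype) : env :=
  fun y => if y == x then Some b else G y.

Inductive atyped (L : library) (G : env) : aterm -> btype -> Prop :=
| ATy_Var x b : G x = Some b -> atyped L G (AVar x) b
| ATy_App c T (s : subst) (es : seq aterm) :
    onth L c = Some T ->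
    tground (tsubst s T) ->
    size es = size T.1 ->
    (forall i, i < size es ->
       atyped L G (nth (AVar 0) es i) (nth (TVar 0) (tsubst s T).1 i)) ->
    atyped L G (AApp c es) (tsubst s T).2.

Inductive ntyped (L : library) : env -> nterm -> ty -> Prop :=
| NTy_A G e b : atyped L G e b -> ntyped L G (NA e) ([::], b)
| NTy_Lam G x E b bs r :
    ntyped L (env_ext G x b) E (bs, r) -> ntyped L G (NLam x E) (b :: bs, r).

Definition solvable (L : library) (t : ty) : Prop :=
  exists E : nterm, ntyped L env0 E t.

Fixpoint enc_b (B : btype) : GenTree.tree nat :=
  match B with
  | TVar tau => GenTree.Node 0 [:: GenTree.Leaf tau]
  | TCon c args => GenTree.Node 1 (GenTree.Leaf c :: map enc_b args)
  end.

Definition enc_ty (T : ty) : GenTree.tree nat :=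
  GenTree.Node 2 (enc_b T.2 :: map enc_b T.1).

Definition enc_instance (L : library) (t : ty) : GenTree.tree nat :=
  GenTree.Node 3 (enc_ty t :: map enc_ty L).

Definition code (L : library) (t : ty) : nat := pickle (enc_instance L t).

Inductive instr : Type :=
| INC (r : nat)
| DEC (r : nat) (j : nat).

Definition program := seq instr.
Definition config := (nat * (nat -> nat))%type.

Definition upd (R : nat -> nat) (r v : nat) : nat -> nat :=
  fun q => if q == r then v else R q.

Definition step (p : program) (c : config) : config :=
  let: (pc, R) := c in
  match onth p pc with
  | None => c
  | Some (INC r) => (pc.+1, upd R r (R r).+1)
  | Some (DEC r j) =>
      match R r with
      | 0 => (j, R)
      | k.+1 => (pc.+1, upd R r k)
      end
  end.

Definition halted (p : program) (c : config) : bool := size p <= c.1.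

Definition init (n : nat) : config := (0, fun q => if q == 0 then n else 0).

Definition rm_outputs (p : program) (n v : nat) : Prop :=
  exists k, halted p (iter k (step p) (init n)) /\ (iter k (step p) (init n)).2 0 = v.

Definition decides_synthesis (p : program) : Prop :=
  forall (L : library) (t : ty), tground t ->
    (solvable L t -> rm_outputs p (code L t) 1) /\
    (~ solvable L t -> rm_outputs p (code L t) 0).

(* Main.v *)
Require Import Defs.
From mathcomp Require Import all_boot.
Set Implicit Arguments. Unset Strict Implicit.

Fixpoint vnum (b : btype) : nat := match b with TCon 1 [:: x] => (vnum x).+1 | _ => 0 end.
Definition Zt := TCon 0 [::].
Definition St (x : btype) := TCon 1 [:: x].
Fixpoint num (n : nat) : btype := if n is m.+1 then St (num m) else Zt.

Lemma vnum_num n : vnum (num n) = n. Proof. by elim: n => //= n ->. Qed.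
Lemma bsubst_num s n : bsubst s (num n) = num n. Proof. by elim: n => //= n ->. Qed.
Lemma bground_num n : bground (num n). Proof. by elim: n => //= n ->. Qed.
Lemma bsubst_iter s n x : bsubst s (iter n St x) = iter n St (bsubst s x).
Proof. by elim: n => //= n ->. Qed.
Lemma vnum_iter n x : vnum (iter n St x) = n + vnum x.
Proof. by elim: n => //= n ->. Qed.
Lemma iter_num n m : iter n St (num m) = num (n + m).
Proof. by elim: n => //= n ->. Qed.

Fixpoint In {A} (x : A) (l : seq A) : Prop := if l is y :: l' then x = y \/ In x l' else False.
Lemma In_catl A (x : A) l1 l2 : In x l1 -> In x (l1 ++ l2).
Proof. by elim: l1 => //= y l IH [->|/IH]; auto. Qed.
Lemma In_catr A (x : A) l1 l2 : In x l2 -> In x (l1 ++ l2).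
Proof. by elim: l1 => //= y l IH /IH; auto. Qed.
Lemma In_cat A (x : A) l1 l2 : In x (l1 ++ l2) -> In x l1 \/ In x l2.
Proof. elim: l1 => [|y l IH] /=; first by right. case=> [->|/IH [] ]; auto. Qed.
Lemma In_onth A (x : A) l : In x l -> exists c, onth l c = Some x.
Proof.
elim: l => //= y l IH [->|/IH [c Hc]]; first by exists 0.
by exists c.+1.
Qed.
Lemma onth_In A (x : A) l c : onth l c = Some x -> In x l.
Proof. elim: l c => [|y l IH] [|c] //=; [case=> ->|move/IH]; auto. Qed.

Fixpoint btype_ind' (P : btype -> Prop) (HV : forall t, P (TVar t))
  (HC : forall c args, (forall x, In x args -> P x) -> P (TCon c args)) (b : btype) : P b :=
  match b with
  | TVar t => HV t
  | TCon c args => @HC c args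
     ((fix aux (l : seq btype) : forall x, In x l -> P x :=
        match l with
        | [::] => fun x H => False_ind _ H
        | y :: l' => fun x H => match H with
                      | or_introl E => eq_ind_r P (btype_ind' HV HC y) E
                      | or_intror H' => aux l' x H' end
        end) args)
  end.

Lemma bground_subst s B : (forall q, bground (s q)) -> bground (bsubst s B).
Proof.
move=> Hs; elim/btype_ind': B => //= c args IH.
elim: args IH => //= y l IHl H; rewrite H /=; auto.
Qed.

Lemma tground_subst s T : (forall q, bground (s q)) -> tground (tsubst s T).
Proof.
move=> Hs; rewrite /tground /= (bground_subst _ Hs) andbT.
by elim: T.1 => //= y l ->; rewrite bground_subst.
Qed.

Definition der L b := exists e, atyped L env0 e b.

Lemma fin_choice (Q : nat -> aterm -> Prop) n :
  (forall i, i < n -> exists e, Q i e) ->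
  exists es, size es = n /\ forall i, i < n -> Q i (nth (AVar 0) es i).
Proof.
elim: n => [|n IH] H; first by exists [::].
have [es [Hs Hes]] : exists es, size es = n /\ forall i, i < n -> Q i (nth (AVar 0) es i).
  by apply: IH => i Hi; apply: H; exact: ltnW.
have [e He] := H n (ltnSn n).
exists (rcons es e); split; first by rewrite size_rcons Hs.
move=> i; rewrite ltnS leq_eqVlt => /orP [/eqP ->|Hi].
  by rewrite nth_rcons Hs ltnn eqxx.
by rewrite nth_rcons Hs Hi; apply: Hes.
Qed.

Lemma der_app L T s : In T L -> (forall q, bground (s q)) ->
  (forall i, i < size T.1 -> der L (bsubst s (nth (TVar 0) T.1 i))) ->
  der L (bsubst s T.2).
Proof.
move=> HT Hs H.
have [c Hc] := In_onth HT.
have [es [Hsz Hes]] := fin_choice H. have Hsz0 := Hsz.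
exists (AApp c es).
have -> : bsubst s T.2 = (tsubst s T).2 by [].
apply: ATy_App Hc (tground_subst _ Hs) Hsz _ => i Hi.
move: Hi; rewrite Hsz0 => Hi; rewrite /tsubst /= (nth_map (TVar 0)) //; exact: Hes.
Qed.

Lemma soundness L (P : btype -> Prop) :
  (forall T s, In T L -> (forall i, i < size T.1 -> P (bsubst s (nth (TVar 0) T.1 i))) ->
     P (bsubst s T.2)) ->
  forall b, der L b -> P b.
Proof.
move=> HL b [e He]; elim: He => [x bx|c T s es Hc _ Hsz _ IH] //.
apply: HL (onth_In Hc) _ => i Hi.
have := IH i; rewrite Hsz /tsubst /= (nth_map (TVar 0)) //; auto.
Qed.


Definition Hc (p : program) (c : config) :=
  exists k, halted p (iter k (step p) c) /\ (iter k (step p) c).2 0 = 0.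

Lemma step_halted p c : halted p c -> step p c = c.
Proof.
case: c => pc R; rewrite /halted /step /= => H.
by rewrite onth_default.
Qed.

Lemma iter_halted p c k j : halted p (iter k (step p) c) -> iter (j + k) (step p) c = iter k (step p) c.
Proof. move=> H; elim: j => //= j ->; exact: step_halted. Qed.

Lemma out_det p n v1 v2 : rm_outputs p n v1 -> rm_outputs p n v2 -> v1 = v2.
Proof.
case=> k1 [H1 E1] [k2 [H2 E2]]; rewrite -E1 -E2.
by rewrite -(iter_halted k2 H1) -(iter_halted k1 H2) addnC.
Qed.

Lemma step_ext p pc R R' : R =1 R' ->
  (step p (pc, R)).1 = (step p (pc, R')).1 /\ (step p (pc, R)).2 =1 (step p (pc, R')).2.
Proof.
move=> E; rewrite /step; case: (onth p pc) => [[r|r j]|] //=.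
  by split => // q; rewrite /upd E; case: eqP => // ->; rewrite E.
by rewrite E; case: (R' r) => [|k] //=; split => // q; rewrite /upd E.
Qed.

Lemma iter_ext p k pc R R' : R =1 R' ->
  (iter k (step p) (pc, R)).1 = (iter k (step p) (pc, R')).1 /\
  (iter k (step p) (pc, R)).2 =1 (iter k (step p) (pc, R')).2.
Proof.
elim: k => //= k IH E.
have [E1 E2] := IH E.
case: (iter k (step p) (pc, R)) E1 E2 => pc1 R1.
case: (iter k (step p) (pc, R')) => pc2 R2 /= -> E2.
exact: step_ext.
Qed.

Lemma Hc_ext p pc R R' : R =1 R' -> Hc p (pc, R) -> Hc p (pc, R').
Proof.
move=> E [k [H1 H2]]; exists k; have [E1 E2] := iter_ext p k pc E.
by rewrite /halted -E1 -E2.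
Qed.

Lemma Hc_step p c : Hc p (step p c) -> Hc p c.
Proof. by case=> k H; exists k.+1; rewrite iterSr. Qed.

Definition stp n m := 2 ^ n * m.*2.+1.
Arguments stp : simpl never.
Lemma pk_ex : {f : nat + nat -> nat | f = pickle}. Proof. by exists pickle. Qed.
Definition pk := sval pk_ex.
Lemma pkE : pk = pickle. Proof. exact: (svalP pk_ex). Qed.
Definition F (s : seq (nat + nat)) m := foldr stp m (map pk s).
Definition e k := GenTree.encode (enc_b (num k)).
Definition pre : seq (nat + nat) := [:: inl 4; inl 3; inl 2; inr 7].
Definition Gf x := F pre (F (e x) x).

Lemma F_cat s1 s2 m : F (s1 ++ s2) m = F s1 (F s2 m).
Proof. by rewrite /F map_cat foldr_cat. Qed.

Lemma e0 : e 0 = [:: inl 2; inr 0; inl 0]. Proof. by []. Qed.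
Lemma eS k : e k.+1 = [:: inl 2; inr 1] ++ e k ++ [:: inl 0].
Proof. by rewrite /e /= cats0 cats1. Qed.

Definition ireg (i : instr) := match i with INC r => r | DEC r _ => r end.
Definition maxreg (p : program) := foldr (fun i m => maxn (ireg i) m) 0 p.

Lemma ireg_le p i : i < size p -> ireg (nth (INC 0) p i) <= maxreg p.
Proof.
elim: p i => //= a p IH [|i] /=; first by rewrite leq_maxl.
by move=> /IH H; rewrite (leq_trans H) // leq_maxr.
Qed.

Definition sem (p : program) (b : btype) : Prop :=
  match b with
  | TCon 2 [:: a; b'] => vnum b' = (vnum a).*2
  | TCon 3 [:: k; a; b'] => vnum b' = 2 ^ vnum k * vnum a
  | TCon 4 [:: k; a; b'] => vnum b' = stp (vnum k) (vnum a)
  | TCon 5 [:: x; a; b'] => vnum b' = F (e (vnum x)) (vnum a)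
  | TCon 6 (pc :: regs) => Hc p (vnum pc, nth 0 (map vnum regs))
  | TCon 7 [:: x] => Hc p (0, nth 0 (Gf (vnum x) :: nseq (maxreg p) 0))
  | _ => True
  end.

Definition V := TVar.
Definition Dbl a b := TCon 2 [:: a; b].
Definition Pw k a b := TCon 3 [:: k; a; b].
Definition Stp k a b := TCon 4 [:: k; a; b].
Definition Ep x a b := TCon 5 [:: x; a; b].
Definition Gl x := TCon 7 [:: x].
Definition pkn (x : nat + nat) := num (pk x).
Lemma vnum_pkn s x : vnum (bsubst s (pkn x)) = pk x.
Proof. by rewrite /pkn bsubst_num vnum_num. Qed.
Lemma F_cons x s m : F (x :: s) m = stp (pk x) (F s m). Proof. by []. Qed.
Lemma F_nil m : F [::] m = m. Proof. by []. Qed.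

Definition aclauses (K : nat) : seq ty := [::
  ([::], Dbl Zt Zt);
  ([:: Dbl (V 0) (V 1)], Dbl (St (V 0)) (St (St (V 1))));
  ([::], Pw Zt (V 0) (V 0));
  ([:: Dbl (V 1) (V 3); Pw (V 0) (V 3) (V 2)], Pw (St (V 0)) (V 1) (V 2));
  ([:: Dbl (V 1) (V 3); Pw (V 0) (St (V 3)) (V 2)], Stp (V 0) (V 1) (V 2));
  ([:: Stp (pkn (inl 0)) (V 0) (V 2); Stp (pkn (inr 0)) (V 2) (V 3);
       Stp (pkn (inl 2)) (V 3) (V 1)], Ep Zt (V 0) (V 1));
  ([:: Stp (pkn (inl 0)) (V 1) (V 3); Ep (V 0) (V 3) (V 4);
       Stp (pkn (inr 1)) (V 4) (V 5); Stp (pkn (inl 2)) (V 5) (V 2)],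
     Ep (St (V 0)) (V 1) (V 2));
  ([:: Ep (V 0) (V 0) (V 1); Stp (pkn (inr 7)) (V 1) (V 2);
       Stp (pkn (inl 2)) (V 2) (V 3); Stp (pkn (inl 3)) (V 3) (V 4);
       Stp (pkn (inl 4)) (V 4) (V 5);
       TCon 6 (Zt :: V 5 :: nseq K Zt)], Gl (V 0))].

Definition mkH K (pc : btype) (g : nat -> btype) := TCon 6 (pc :: map g (iota 0 K.+1)).
Definition gs r q := if q == r then St (V q) else V q.
Definition gz r q := if q == r then Zt else V q.

Definition iclauses K i (ins : instr) : seq ty :=
  match ins with
  | INC r => [:: ([:: mkH K (num i.+1) (gs r)], mkH K (num i) V)]
  | DEC r j => [:: ([:: mkH K (num j) (gz r)], mkH K (num i) (gz r));
                   ([:: mkH K (num i.+1) V], mkH K (num i) (gs r))]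
  end.

Definition mclauses (p : program) : seq ty :=
  let K := maxreg p in
  ([::], mkH K (iter (size p) St (V K.+1)) (gz 0)) ::
  flatten [seq iclauses K i (nth (INC 0) p i) | i <- iota 0 (size p)].

Definition lib (p : program) := aclauses (maxreg p) ++ mclauses p.


Lemma sem6 p s pc l : sem p (bsubst s (TCon 6 (pc :: l))) =
  Hc p (vnum (bsubst s pc), nth 0 (map vnum (map (bsubst s) l))).
Proof. by []. Qed.

Lemma nth_regs K s g q : nth 0 (map vnum (map (bsubst s) (map g (iota 0 K.+1)))) q =
  if q < K.+1 then vnum (bsubst s (g q)) else 0.
Proof.
case: ltnP => Hq.
  by rewrite !(nth_map (TVar 0)) ?(nth_map 0) ?size_map ?size_iota // nth_iota.
by rewrite nth_default // !size_map size_iota.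
Qed.

Lemma sem_mkH p K s pc g : sem p (bsubst s (mkH K pc g)) <->
  Hc p (vnum (bsubst s pc), fun q => if q < K.+1 then vnum (bsubst s (g q)) else 0).
Proof.
rewrite /mkH sem6; split=> H; apply: Hc_ext H => q; by rewrite nth_regs.
Qed.

Lemma onth_nth' p i : i < size p -> onth p i = Some (nth (INC 0) p i).
Proof. by move=> H; rewrite onthE (nth_map (INC 0)). Qed.

Lemma In_flatten_iota A (f : nat -> seq A) x m n :
  In x (flatten [seq f i | i <- iota m n]) -> exists i, m <= i < m + n /\ In x (f i).
Proof.
elim: n m => [|n IH] m //=.
move=> Hx; have := In_cat Hx; case=> [H|/IH [i [/andP [H1 H2] H3]]].
  by exists m; rewrite leqnn addnS ltnS leq_addr.
exists i; split => //; rewrite addnS -addSn H2 andbT.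
exact: ltnW.
Qed.

Lemma sem_stpk p s x a b : sem p (bsubst s (Stp (pkn x) a b)) ->
  vnum (bsubst s b) = stp (pk x) (vnum (bsubst s a)).
Proof. by rewrite /= vnum_pkn. Qed.

Lemma sound_a p T s : In T (aclauses (maxreg p)) ->
  (forall i, i < size T.1 -> sem p (bsubst s (nth (TVar 0) T.1 i))) -> sem p (bsubst s T.2).
Proof.
case=> [->|[->|[->|[->|[->|[->|[->|[->|[] ]]]]]]]] /= H //.
- by have /= -> := H 0 isT.
- by rewrite mul1n.
- have /= H0 := H 0 isT; have /= -> := H 1 isT; by rewrite H0 expnS -mul2n mulnCA mulnA.
- have /= H0 := H 0 isT; have /= -> := H 1 isT; by rewrite H0.
- have /= := H 0 isT; have /= := H 1 isT; have /= := H 2 isT.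
  rewrite !vnum_pkn => -> -> ->; by rewrite e0 !F_cons F_nil.
- have /= := H 0 isT; have /= := H 1 isT; have /= := H 2 isT; have /= := H 3 isT.
  rewrite !vnum_pkn => -> -> -> ->; by rewrite eS !F_cat !F_cons F_nil.
- have /= H0 := H 0 isT.
  have /= H1 := sem_stpk (x:=inr 7) (a:=V 1) (b:=V 2) (H 1 isT).
  have /= H2 := sem_stpk (x:=inl 2) (a:=V 2) (b:=V 3) (H 2 isT).
  have /= H3 := sem_stpk (x:=inl 3) (a:=V 3) (b:=V 4) (H 3 isT).
  have /= H4 := sem_stpk (x:=inl 4) (a:=V 4) (b:=V 5) (H 4 isT).
  have HG : Gf (vnum (s 0)) = vnum (s 5).
    by rewrite /Gf /pre !F_cons F_nil -H0 -H1 -H2 -H3 -H4.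
  rewrite HG.
  have := H 5 isT.
  have -> : nth (TVar 0) [:: Ep (V 0) (V 0) (V 1); Stp (pkn (inr 7)) (V 1) (V 2);
       Stp (pkn (inl 2)) (V 2) (V 3); Stp (pkn (inl 3)) (V 3) (V 4);
       Stp (pkn (inl 4)) (V 4) (V 5);
       TCon 6 (Zt :: V 5 :: nseq (maxreg p) Zt)] 5 = TCon 6 (Zt :: V 5 :: nseq (maxreg p) Zt) by [].
  rewrite sem6 => H5.
  apply: Hc_ext H5 => q.
  by rewrite /= !map_nseq.
Qed.

Lemma sound_m p T s : In T (mclauses p) ->
  (forall i, i < size T.1 -> sem p (bsubst s (nth (TVar 0) T.1 i))) -> sem p (bsubst s T.2).
Proof.
set K := maxreg p.
move=> HT0 H.
have [HT1|HT2] : T = _ \/ In T _ := HT0.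
  rewrite HT1 in H *.
  apply/sem_mkH; exists 0; split.
    by rewrite /halted /= bsubst_iter vnum_iter leq_addr.
  by [].
have [i [/andP [_ Hi] HT]] := In_flatten_iota HT2.
rewrite add0n in Hi.
have Hr := ireg_le Hi; have Ho := onth_nth' Hi.
move: Ho Hr HT H; case: (nth (INC 0) p i) => [r|r j] Ho Hr /=.
- case=> [->|[]] // H.
  move: (H 0 isT) => /sem_mkH; rewrite ?(bsubst_num s i.+1) ?bsubst_num vnum_num => Hp.
  apply/sem_mkH; rewrite bsubst_num vnum_num.
  apply: Hc_step; rewrite /step Ho /=.
  apply: Hc_ext Hp => q; rewrite /upd /gs.
  case: eqP => [->|Hq]; first by rewrite ltnS Hr.
  by [].
- case=> [->|[->|[]]] // H.
  + move: (H 0 isT) => /sem_mkH; rewrite ?(bsubst_num s i.+1) ?bsubst_num vnum_num => Hp.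
    apply/sem_mkH; rewrite bsubst_num vnum_num.
    apply: Hc_step; rewrite /step Ho /= ltnS Hr /gz eqxx /=.
    exact: Hp.
  + move: (H 0 isT) => /sem_mkH; rewrite ?(bsubst_num s i.+1) ?bsubst_num vnum_num => Hp.
    apply/sem_mkH; rewrite bsubst_num vnum_num.
    apply: Hc_step; rewrite /step Ho /= ltnS Hr /gs eqxx /=.
    apply: Hc_ext Hp => q; rewrite /upd.
    case: eqP => [->|Hq]; first by rewrite ltnS Hr.
    by [].
Qed.

Lemma sound_lib p b : der (lib p) b -> sem p b.
Proof.
apply: soundness => T s HT0 H; have [HT|HT] := In_cat HT0.
  exact: sound_a HT H.
exact: sound_m HT H.
Qed.


Definition sl (l : seq btype) : subst := fun q => nth Zt l q.

Lemma sl_ground rs q : bground (sl (map num rs) q).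
Proof.
rewrite /sl; case: (ltnP q (size (map num rs))) => H.
  by rewrite (nth_map 0) ?bground_num // -(size_map num).
by rewrite nth_default.
Qed.

Lemma sl_num rs q : q < size rs -> sl (map num rs) q = num (nth 0 rs q).
Proof. by move=> H; rewrite /sl (nth_map 0). Qed.

Lemma map_iota_subst K s g rs : size rs = K.+1 ->
  (forall q, q < K.+1 -> bsubst s (g q) = num (nth 0 rs q)) ->
  map (bsubst s) (map g (iota 0 K.+1)) = map num rs.
Proof.
move=> Hs H; apply: (eq_from_nth (x0 := Zt)); first by rewrite !size_map size_iota Hs.
move=> q; rewrite !size_map size_iota => Hq.
rewrite (nth_map Zt) ?size_map ?size_iota // (nth_map 0) ?size_iota // nth_iota //.
rewrite (nth_map 0) ?Hs // add0n H //.
Qed.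

Lemma In_flatten_iota2 A (f : nat -> seq A) x n i :
  i < n -> In x (f i) -> In x (flatten [seq f i | i <- iota 0 n]).
Proof.
move=> Hi Hx.
suff H : forall m, m <= i < m + n -> In x (flatten [seq f i | i <- iota m n]).
  by apply: H; rewrite add0n Hi.
elim: n {Hi} => [|n IH] m /andP [H1 H2] /=; first by rewrite addn0 ltnNge H1 in H2.
case: (ltnP m i) => Hm.
  apply: In_catr; apply: IH; by rewrite Hm addSn -addnS H2.
have -> : m = i by apply/eqP; rewrite eqn_leq H1 Hm.
exact: In_catl.
Qed.

Lemma upd_set rs r v : upd (nth 0 rs) r v =1 nth 0 (set_nth 0 rs r v).
Proof. by move=> q; rewrite /upd nth_set_nth. Qed.

Lemma In_a p T : In T (aclauses (maxreg p)) -> In T (lib p).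
Proof. exact: In_catl. Qed.

Ltac ina := apply: In_a; rewrite /=; do ?[left; reflexivity | right].

Lemma c_dbl p n : der (lib p) (Dbl (num n) (num n.*2)).
Proof.
elim: n => [|n IH].
  apply: (der_app (T := ([::], Dbl Zt Zt)) (s := sl [::])); first by ina.
    by move=> q; rewrite /sl nth_nil.
  by [].
apply: (der_app (T := ([:: Dbl (V 0) (V 1)], Dbl (St (V 0)) (St (St (V 1))))) (s := sl (map num [:: n; n.*2]))).
- by ina.
- exact: sl_ground.
- by case=> [|//] _.
Qed.

Lemma c_pw p k a : der (lib p) (Pw (num k) (num a) (num (2 ^ k * a))).
Proof.
elim: k a => [|k IH] a.
  rewrite expn0 mul1n.
  apply: (der_app (T := ([::], Pw Zt (V 0) (V 0))) (s := sl (map num [:: a]))); first by ina.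
    exact: sl_ground.
  by [].
have -> : 2 ^ k.+1 * a = 2 ^ k * a.*2 by rewrite expnS -mul2n mulnCA mulnA.
apply: (der_app (T := ([:: Dbl (V 1) (V 3); Pw (V 0) (V 3) (V 2)], Pw (St (V 0)) (V 1) (V 2)))
  (s := sl (map num [:: k; a; 2 ^ k * a.*2; a.*2]))).
- by ina.
- exact: sl_ground.
- case=> [|[|//]] _; [exact: c_dbl | exact: IH].
Qed.

Lemma c_stp p k a : der (lib p) (Stp (num k) (num a) (num (stp k a))).
Proof.
apply: (der_app (T := ([:: Dbl (V 1) (V 3); Pw (V 0) (St (V 3)) (V 2)], Stp (V 0) (V 1) (V 2)))
  (s := sl (map num [:: k; a; stp k a; a.*2]))).
- by ina.
- exact: sl_ground.
- case=> [|[|//]] _; [exact: c_dbl | exact: (c_pw p k (a.*2).+1)].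
Qed.

Lemma c_E p x a : der (lib p) (Ep (num x) (num a) (num (F (e x) a))).
Proof.
elim: x a => [|x IH] a.
  rewrite e0 !F_cons F_nil.
  apply: (der_app (T := ([:: Stp (pkn (inl 0)) (V 0) (V 2); Stp (pkn (inr 0)) (V 2) (V 3);
       Stp (pkn (inl 2)) (V 3) (V 1)], Ep Zt (V 0) (V 1)))
    (s := sl (map num [:: a; stp (pk (inl 2)) (stp (pk (inr 0)) (stp (pk (inl 0)) a));
                stp (pk (inl 0)) a; stp (pk (inr 0)) (stp (pk (inl 0)) a)]))).
  - by ina.
  - exact: sl_ground.
  - case=> [|[|[|//]]] _ /=; rewrite ?bsubst_num; exact: c_stp.
rewrite eS !F_cat !F_cons F_nil.
apply: (der_app (T := ([:: Stp (pkn (inl 0)) (V 1) (V 3); Ep (V 0) (V 3) (V 4);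
       Stp (pkn (inr 1)) (V 4) (V 5); Stp (pkn (inl 2)) (V 5) (V 2)],
     Ep (St (V 0)) (V 1) (V 2)))
  (s := sl (map num [:: x; a;
     stp (pk (inl 2)) (stp (pk (inr 1)) (F (e x) (stp (pk (inl 0)) a)));
     stp (pk (inl 0)) a; F (e x) (stp (pk (inl 0)) a);
     stp (pk (inr 1)) (F (e x) (stp (pk (inl 0)) a))]))).
- by ina.
- exact: sl_ground.
- case=> [|[|[|[|//]]]] _ /=; rewrite ?bsubst_num; try exact: c_stp; exact: IH.
Qed.

Lemma bsubst_mkH s K pc g : bsubst s (mkH K pc g) =
  TCon 6 (bsubst s pc :: map (bsubst s) (map g (iota 0 K.+1))).
Proof. by []. Qed.

Lemma In_i p i T : i < size p -> In T (iclauses (maxreg p) i (nth (INC 0) p i)) -> In T (lib p).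
Proof.
move=> Hi HT; apply: In_catr; right; exact: In_flatten_iota2 Hi HT.
Qed.

Lemma c_halt p pc rs : size rs = (maxreg p).+1 -> size p <= pc -> nth 0 rs 0 = 0 ->
  der (lib p) (TCon 6 (num pc :: map num rs)).
Proof.
move=> Hs Hpc H0.
set K := maxreg p.
set s := fun q => if q == K.+1 then num (pc - size p) else sl (map num rs) q.
have E : bsubst s (mkH K (iter (size p) St (V K.+1)) (gz 0)) = TCon 6 (num pc :: map num rs).
  rewrite bsubst_mkH bsubst_iter [bsubst s (V _)]/= {1}/s eqxx iter_num subnKC //; congr (TCon 6 (_ :: _)).
  apply: map_iota_subst => // q Hq; rewrite /gz.
  case: eqP => [->|_]; first by rewrite H0.
  by rewrite [bsubst _ _]/= /s (ltn_eqF Hq) sl_num ?Hs.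
rewrite -E; apply: (der_app (T := ([::], mkH K (iter (size p) St (V K.+1)) (gz 0)))).
- by apply: In_catr; left.
- by move=> q; rewrite /s; case: eqP => _; [exact: bground_num | exact: sl_ground].
- by [].
Qed.

Lemma c_mach p k : forall pc rs, size rs = (maxreg p).+1 ->
  halted p (iter k (step p) (pc, nth 0 rs)) -> (iter k (step p) (pc, nth 0 rs)).2 0 = 0 ->
  der (lib p) (TCon 6 (num pc :: map num rs)).
Proof.
set K := maxreg p.
elim: k => [|k IH] pc rs Hs.
  by move=> /= H1 H2; apply: c_halt.
case: (leqP (size p) pc) => Hpc.
  have Hh : halted p (iter 0 (step p) (pc, nth 0 rs)) by [].
  rewrite -[k.+1]addn0 (iter_halted _ Hh) /= => _ H2; exact: c_halt.
have Ho := onth_nth' Hpc; have Hr := ireg_le Hpc.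
have Hin := @In_i p pc _ Hpc.
rewrite iterSr.
move: Ho Hr Hin; case: (nth (INC 0) p pc) => [r|r j] Ho Hr Hin; rewrite /step Ho.
- set rs' := set_nth 0 rs r (nth 0 rs r).+1.
  have Hs' : size rs' = K.+1 by rewrite size_set_nth Hs; apply/maxn_idPr.
  move=> H1 H2.
  have [E1 E2] := iter_ext p k pc.+1 (upd_set rs r (nth 0 rs r).+1).
  have IH' := IH pc.+1 rs' Hs'.
  rewrite /halted /rs' -E1 -E2 in IH'; have D := IH' H1 H2.
  have E : bsubst (sl (map num rs)) (mkH K (num pc) V) = TCon 6 (num pc :: map num rs).
    rewrite bsubst_mkH bsubst_num; congr (TCon 6 (_ :: _)).
    by apply: map_iota_subst => // q Hq; rewrite /= sl_num ?Hs.
  rewrite -E; apply: (der_app (T := ([:: mkH K (num pc.+1) (gs r)], mkH K (num pc) V))).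
  + by apply: Hin; left.
  + exact: sl_ground.
  + case=> [|//] _; rewrite [nth _ _ 0]/=.
    have -> : bsubst (sl (map num rs)) (mkH K (num pc.+1) (gs r)) = TCon 6 (num pc.+1 :: map num rs').
      rewrite bsubst_mkH (bsubst_num _ pc.+1); congr (TCon 6 (_ :: _)).
      apply: map_iota_subst => // q Hq; rewrite /gs /rs' nth_set_nth /=.
      by case: eqP => [->|_] /=; rewrite sl_num ?Hs // -Hs.
    exact: D.
- case Hz: (nth 0 rs r) => [|m].
  + move=> H1 H2; have D := IH j rs Hs H1 H2.
    have E : bsubst (sl (map num rs)) (mkH K (num pc) (gz r)) = TCon 6 (num pc :: map num rs).
      rewrite bsubst_mkH bsubst_num; congr (TCon 6 (_ :: _)).
      apply: map_iota_subst => // q Hq; rewrite /gz.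
      by case: eqP => [->|_]; rewrite ?Hz //= sl_num ?Hs.
    rewrite -E; apply: (der_app (T := ([:: mkH K (num j) (gz r)], mkH K (num pc) (gz r)))).
    * by apply: Hin; left.
    * exact: sl_ground.
    * case=> [|//] _; rewrite [nth _ _ 0]/=.
      have -> : bsubst (sl (map num rs)) (mkH K (num j) (gz r)) = TCon 6 (num j :: map num rs).
        rewrite bsubst_mkH bsubst_num; congr (TCon 6 (_ :: _)).
        apply: map_iota_subst => // q Hq; rewrite /gz.
        by case: eqP => [->|_]; rewrite ?Hz //= sl_num ?Hs.
      exact: D.
  + set rs' := set_nth 0 rs r m.
    have Hs' : size rs' = K.+1 by rewrite size_set_nth Hs; apply/maxn_idPr.
    move=> H1 H2.
    have [E1 E2] := iter_ext p k pc.+1 (upd_set rs r m).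
    have IH' := IH pc.+1 rs' Hs'.
    rewrite /halted /rs' -E1 -E2 in IH'; have D := IH' H1 H2.
    have E : bsubst (sl (map num rs')) (mkH K (num pc) (gs r)) = TCon 6 (num pc :: map num rs).
      rewrite bsubst_mkH bsubst_num; congr (TCon 6 (_ :: _)).
      apply: map_iota_subst => // q Hq; rewrite /gs.
      case: eqP => [->|Hq'] /=; rewrite sl_num ?Hs' // /rs' nth_set_nth /= ?eqxx ?Hz //.
      by move/eqP/negbTE: Hq' => ->.
    rewrite -E; apply: (der_app (T := ([:: mkH K (num pc.+1) V], mkH K (num pc) (gs r)))).
    * by apply: Hin; right; left.
    * exact: sl_ground.
    * case=> [|//] _; rewrite [nth _ _ 0]/=.
      have -> : bsubst (sl (map num rs')) (mkH K (num pc.+1) V) = TCon 6 (num pc.+1 :: map num rs').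
        rewrite bsubst_mkH (bsubst_num _ pc.+1); congr (TCon 6 (_ :: _)).
        by apply: map_iota_subst => // q Hq; rewrite /= sl_num ?Hs'.
      exact: D.
Qed.


Definition tail (L : library) : seq (nat + nat) :=
  inl 0 :: inl 0 :: flatten [seq GenTree.encode (enc_ty T) | T <- L] ++ [:: inl 0].

Lemma enc_eq L x : GenTree.encode (enc_instance L ([::], Gl x)) =
  pre ++ GenTree.encode (enc_b x) ++ tail L.
Proof.
rewrite /enc_instance /enc_ty /= /tail.
rewrite !cats0 -!cats1 -!catA /= -map_comp.
by [].
Qed.

Lemma pickle_tree (t : GenTree.tree nat) :
  pickle t = CodeSeq.code (map pickle (GenTree.encode t)).
Proof. reflexivity. Qed.

Lemma code_cat3 (a b c : seq (nat + nat)) : CodeSeq.code (map pickle (a ++ b ++ c)) =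
  foldr stp (foldr stp (CodeSeq.code (map pickle c)) (map pickle b)) (map pickle a).
Proof. by rewrite !map_cat /CodeSeq.code !foldr_cat. Qed.

Definition Mp (p : program) := CodeSeq.code (map pickle (tail (lib p))).

Lemma code_eq p : code (lib p) ([::], Gl (num (Mp p))) = Gf (Mp p).
Proof.
rewrite /code /Gf.
rewrite pickle_tree (enc_eq (lib p) (num (Mp p))) code_cat3 /F pkE.
rewrite /Mp /e.
reflexivity.
Qed.

Lemma c_goal p M : Hc p (0, nth 0 (Gf M :: nseq (maxreg p) 0)) -> der (lib p) (Gl (num M)).
Proof.
set K := maxreg p.
set y1 := F (e M) M.
set y2 := stp (pk (inr 7)) y1.
set y3 := stp (pk (inl 2)) y2.
set y4 := stp (pk (inl 3)) y3.
have HG : Gf M = stp (pk (inl 4)) y4 by rewrite /Gf /pre !F_cons F_nil.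
rewrite HG => [[k [H1 H2]]].
have D := c_mach (p := p) (k := k) (pc := 0) (rs := stp (pk (inl 4)) y4 :: nseq K 0).
rewrite /= size_nseq in D; have {}D := D erefl H1 H2.
apply: (der_app (T := ([:: Ep (V 0) (V 0) (V 1); Stp (pkn (inr 7)) (V 1) (V 2);
       Stp (pkn (inl 2)) (V 2) (V 3); Stp (pkn (inl 3)) (V 3) (V 4);
       Stp (pkn (inl 4)) (V 4) (V 5);
       TCon 6 (Zt :: V 5 :: nseq K Zt)], Gl (V 0)))
  (s := sl (map num [:: M; y1; y2; y3; y4; stp (pk (inl 4)) y4]))).
- by ina.
- exact: sl_ground.
- case=> [|[|[|[|[|[|//]]]]]] _.
  + exact: c_E.
  + rewrite [nth _ _ _]/= /= !bsubst_num; exact: c_stp.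
  + rewrite [nth _ _ _]/= /= !bsubst_num; exact: c_stp.
  + rewrite [nth _ _ _]/= /= !bsubst_num; exact: c_stp.
  + rewrite [nth _ _ _]/= /= !bsubst_num; exact: c_stp.
  + rewrite [nth _ _ _]/= /= map_nseq /=.
    by move: D; rewrite map_nseq.
Qed.

Lemma Hc_init p N : Hc p (init N) <-> Hc p (0, nth 0 (N :: nseq (maxreg p) 0)).
Proof.
have E : (fun q => if q == 0 then N else 0) =1 nth 0 (N :: nseq (maxreg p) 0).
  by case=> [|q] //=; rewrite nth_nseq; case: ifP.
split=> H; [exact: Hc_ext E H | apply: Hc_ext H => q; by rewrite E].
Qed.

Lemma tground_Gl x : bground x -> tground ([::], Gl x).
Proof. by move=> H; rewrite /tground /= andbT. Qed.

Lemma sem_Gl p x : sem p (Gl x) = Hc p (0, nth 0 (Gf (vnum x) :: nseq (maxreg p) 0)).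
Proof. by []. Qed.

Lemma ntyped_base L b E : ntyped L env0 E ([::], b) -> der L b.
Proof. move=> H; inversion H; subst; eexists; eassumption. Qed.

Theorem mainTheorem13 : ~ (exists p : program, decides_synthesis p).
Proof.
case=> p Hp.
set M := Mp p.
have Ht : tground ([::], Gl (num M)) := tground_Gl (bground_num M).
have [H1 H0] := Hp (lib p) ([::], Gl (num M)) Ht.
rewrite code_eq in H1 H0.
have E1 : solvable (lib p) ([::], Gl (num M)) -> rm_outputs p (Gf M) 0.
  case=> E /ntyped_base /sound_lib; rewrite sem_Gl vnum_num => H.
  by apply/Hc_init.
have E2 : rm_outputs p (Gf M) 0 -> solvable (lib p) ([::], Gl (num M)).
  move=> /Hc_init /c_goal [e He]; exists (NA e); exact: NTy_A.
have nS : ~ solvable (lib p) ([::], Gl (num M)).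
  by move=> S; have := out_det (H1 S) (E1 S).
exact: nS (E2 (H0 nS)).
Qed.
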